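(* Consider the following $m$-round game against an adversary. In each round $i$, the adversary chooses (possibly based on the first $i-1$ rounds) numbers $0\leq p_i\leq\frac12$, $\frac{p_i}{4}\leq q_i\leq 1-p_i$, and $\gamma_i\in[0,1]$; then a random variable $X_i\in\{0,1,2\}$ is sampled with $\Pr[X_i=1]=p_i$, $\Pr[X_i=2]=q_i$, $\Pr[X_i=0]=1-p_i-q_i$, and its outcome is given to the adversary. For $k\in\mathbb R$ and $i\in[m]$ let $Z_i^{(k)}$ be the indicator of the event $\sum_{j=1}^{i}\mathbb 1\{X_j=2\}\gamma_j\leq k$, and for $j\in[m]$ let $W_j^{(k)}=\sum_{i=j}^{m}\mathbb 1\{X_i=1\}\gamma_i Z_i^{(k)}$, and $W^{(k)}=W_1^{(k)}$. Then for every adversary strategy, every $k\geq0$, every $\lambda\in\mathbb R$ and every $j\in[m]$, $$\Pr[W_j^{(k)}>\lambda]\leq\exp\left(-\frac{\lambda}{5}+3(k+1)\right).$$ In particular $\Pr[W^{(k)}>\lambda]\leq\exp\left(-\frac{\lambda}{5}+3(k+1)\right)$. *)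

(* Defs.v *)
From mathcomp Require Import all_boot all_order all_algebra.
From mathcomp Require Import reals sequences exp.
Set Implicit Arguments. Unset Strict Implicit. Unset Printing Implicit Defensive.
Import Order.TTheory GRing.Theory Num.Theory.
Local Open Scope ring_scope.

(* Rounds are indexed by i : 'I_m (0-based: round i here = round i+1 in the paper).
   An outcome of the whole game is x : {ffun 'I_m -> 'I_3}, x i = X_{i+1}.
   A (deterministic, adaptive) adversary is given by three functions P Q G
   mapping the history (the list of outcomes of the previous rounds) to
   p_i, q_i, gamma_i. *)

Section Game.
Variables (R : realType) (m : nat).
Variables (P Q G : seq 'I_3 -> R).

Definition outcome := {ffun 'I_m -> 'I_3}.

Definition hist (x : outcome) (i : 'I_m) : seq 'I_3 :=
  map (fun j : 'I_m => x j) (filter (fun j : 'I_m => (j < i)%N) (enum 'I_m)).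

Definition valid_adversary : Prop :=
  forall s : seq 'I_3, (size s < m)%N ->
    [/\ 0 <= P s, P s <= 1/2, P s / 4 <= Q s, Q s <= 1 - P s
      & 0 <= G s /\ G s <= 1].

Definition round_prob (p q : R) (o : 'I_3) : R :=
  if val o == 1%N then p else if val o == 2%N then q else 1 - p - q.

Definition seq_prob (x : outcome) : R :=
  \prod_(i < m) round_prob (P (hist x i)) (Q (hist x i)) (x i).

Definition ind (b : bool) : R := if b then 1 else 0.

Definition gam (x : outcome) (i : 'I_m) : R := G (hist x i).

Definition Zind (k : R) (x : outcome) (i : 'I_m) : R :=
  ind ((\sum_(j < m | (j <= i)%N) ind (val (x j) == 2%N) * gam x j) <= k).

Definition Wj (k : R) (j : 'I_m) (x : outcome) : R :=
  \sum_(i < m | (j <= i)%N) ind (val (x i) == 1%N) * gam x i * Zind k x i.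

Definition prob_W_gt (k : R) (j : 'I_m) (lambda : R) : R :=
  \sum_(x : outcome | lambda < Wj k j x) seq_prob x.
End Game.

(* Main.v *)
Require Import Defs.
From mathcomp Require Import all_boot all_order all_algebra.
From mathcomp Require Import reals sequences exp.
From mathcomp Require Import ring lra.
Set Implicit Arguments. Unset Strict Implicit. Unset Printing Implicit Defensive.
Import Order.TTheory GRing.Theory Num.Theory.
Local Open Scope ring_scope.

Lemma numeric (R : realType) : 4 <= \sum_(i < 15) ((81/100 : R) ^+ i.+1).
Proof. rewrite !big_ord_recr big_ord0 /=. lra. Qed.

Lemma key_ineq (R : realType) (p q g : R) : 0 <= p -> p / 4 <= q -> 0 <= g <= 1 ->
  p * expR (g / 5) + q * expR (- (3 * g)) + (1 - p - q) <= 1.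
Proof.
move=> p0 pq /andP[g0 g1].
set v := expR (- (g / 5)).
have v0 : 0 < v by apply: expR_gt0.
have v1 : v <= 1 by rewrite /v expR_le1; lra.
have vlb : 81/100 <= v.
  have -> : v = expR (- (g/10)) ^+ 2 by rewrite -expRM_natl; congr expR; lra.
  have h := expR_ge1Dx (- (g/10)).
  apply: (le_trans _ (lerXn2r _ _ _ h)); rewrite ?nnegrE; [|lra|lra].
  nra.
have e1 : expR (g/5) = v^-1 by rewrite /v expRN invrK.
have e2 : expR (- (3 * g)) = v ^+ 15 by rewrite /v -expRM_natl; congr expR; lra.
rewrite e1 e2.
have S4 : 4 <= \sum_(i < 15) v ^+ i.+1.
  apply: (le_trans (numeric R)); apply: ler_sum => i _.
  by apply: lerXn2r; rewrite ?nnegrE //; lra.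
have hv : 1 - v ^+ 15 = (1 - v) * \sum_(i < 15) v ^+ i.
  by rewrite -opprB subrX1 -mulNr opprB.
have key : 4 * (v^-1 - 1) <= 1 - v ^+ 15.
  have -> : v^-1 - 1 = (1 - v) / v by field; rewrite gt_eqF.
  have E : \sum_(i < 15) v ^+ i.+1 = v * \sum_(i < 15) v ^+ i.
    by rewrite mulr_sumr; apply: eq_bigr => i _; rewrite exprS.
  have h2 : (1 - v) * 4 <= (1 - v) * \sum_(i < 15) v ^+ i.+1.
    by apply: ler_wpM2l => //; lra.
  rewrite hv mulrA ler_pdivrMr //.
  have -> : (1 - v) * (\sum_(i < 15) v ^+ i) * v = (1 - v) * (v * \sum_(i < 15) v ^+ i) by ring.
  rewrite -E mulrC.
  exact: h2.
have : p * (v^-1 - 1) <= q * (1 - v ^+ 15).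
  have A : 0 <= 1 - v ^+ 15 by rewrite subr_ge0 exprn_ile1 //; lra.
  apply: (le_trans _ (ler_wpM2r A pq)).
  have B : p * (v^-1 - 1) = p / 4 * (4 * (v^-1 - 1)) by rewrite mulrA divfK // pnatr_eq0.
  by rewrite B; apply: ler_wpM2l => //; lra.
lra.
Qed.

Section S.
Variable R : realType.

Fixpoint sumseq (n : nat) (F : seq 'I_3 -> R) : R :=
  match n with
  | 0 => F [::]
  | n'.+1 => \sum_(o : 'I_3) sumseq n' (fun s => F (o :: s))
  end.

Lemma sumseq_ext n F F' : (forall s, F s = F' s) -> sumseq n F = sumseq n F'.
Proof.
elim: n F F' => [|n IH] F F' E /=; first exact: E.
by apply: eq_bigr => o _; apply: IH => s; apply: E.
Qed.

Lemma sumseq_scale n c F : sumseq n (fun s => c * F s) = c * sumseq n F.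
Proof.
elim: n F => [|n IH] F //=.
by rewrite mulr_sumr; apply: eq_bigr => o _; rewrite IH.
Qed.

Definition seqof m (x : {ffun 'I_m -> 'I_3}) : seq 'I_3 := [seq x i | i <- enum 'I_m].

Definition consf m (o : 'I_3) (y : {ffun 'I_m -> 'I_3}) : {ffun 'I_m.+1 -> 'I_3} :=
  [ffun i => if unlift ord0 i is Some j then y j else o].

Lemma seqof_cons m o (y : {ffun 'I_m -> 'I_3}) : seqof (consf o y) = o :: seqof y.
Proof.
rewrite /seqof enum_ordSl /= ffunE unlift_none; congr cons.
by rewrite -map_comp; apply: eq_map => j /=; rewrite ffunE liftK.
Qed.

Lemma sum_ffun_sumseq m F :
  \sum_(x : {ffun 'I_m -> 'I_3}) F (seqof x) = sumseq m F.
Proof.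
elim: m F => [|m IH] F /=.
  rewrite (eq_bigr (fun _ => F [::])) => [|x _].
    by rewrite sumr_const card_ffun !card_ord expn0.
  by congr F; apply/size0nil; rewrite size_map size_enum_ord.
transitivity (\sum_(o : 'I_3) \sum_(y : {ffun 'I_m -> 'I_3}) F (seqof (consf o y))); last first.
  by apply: eq_bigr => o _; rewrite -IH; apply: eq_bigr => y _; rewrite seqof_cons.
rewrite pair_big /=.
rewrite (reindex (fun p : 'I_3 * {ffun 'I_m -> 'I_3} => consf p.1 p.2)) //=.
apply: onW_bij.
exists (fun x : {ffun 'I_m.+1 -> 'I_3} => (x ord0, [ffun j => x (lift ord0 j)])).
  move=> [o y] /=; rewrite /consf ffunE unlift_none; congr pair.
  by apply/ffunP => j; rewrite !ffunE liftK.
move=> x; apply/ffunP => i; rewrite /consf /= ffunE.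
by case: unliftP => [j ->|->]; rewrite ?ffunE.
Qed.


Definition dd (G : seq 'I_3 -> R) (s : seq 'I_3) (j : nat) : R :=
  ind R (val (nth ord0 s j) == 2%N) * G (take j s).
Definition Aseq G s n : R := \sum_(0 <= j < n) dd G s j.
Definition lf (c g : R) (o : 'I_3) : R :=
  if 0 <= c then (if val o == 1%N then g / 5 else if val o == 2%N then - (3 * g) else 0)
  else 0.
Definition MI G (k : R) s : R :=
  expR (\sum_(0 <= i < size s) lf (k - Aseq G s i) (G (take i s)) (nth ord0 s i)).
Definition sprobI (P Q : seq 'I_3 -> R) s : R :=
  \prod_(0 <= i < size s) round_prob (P (take i s)) (Q (take i s)) (nth ord0 s i).

Lemma sprobI_cons P Q o s : sprobI P Q (o :: s) =
  round_prob (P [::]) (Q [::]) o * sprobI (fun t => P (o :: t)) (fun t => Q (o :: t)) s.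
Proof. by rewrite /sprobI /= big_nat_recl //. Qed.

Lemma Aseq_cons G o s i : Aseq G (o :: s) i.+1 =
  dd G (o :: s) 0 + Aseq (fun t => G (o :: t)) s i.
Proof. rewrite /Aseq big_nat_recl //. Qed.

Lemma MI_cons G k o s : MI G k (o :: s) =
  expR (lf k (G [::]) o) * MI (fun t => G (o :: t)) (k - dd G (o :: s) 0) s.
Proof.
rewrite /MI big_nat_recl // expRD.
congr (expR _ * expR _).
  rewrite /Aseq big_geq // subr0 take0; reflexivity.
apply: eq_bigr => i _; rewrite Aseq_cons opprD addrA; reflexivity.
Qed.

Lemma Elemma n P Q G k : valid_adversary n P Q G ->
  sumseq n (fun s => sprobI P Q s * MI G k s) <= 1.
Proof.
elim: n P Q G k => [|n IH] P Q G k V.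
  rewrite /sumseq /sprobI /MI !big_geq // expR0 mulr1; exact: lexx.
change (\sum_(o : 'I_3) sumseq n (fun s => sprobI P Q (o :: s) * MI G k (o :: s)) <= 1).
pose c o := round_prob (P [::]) (Q [::]) o * expR (lf k (G [::]) o).
have [p0 p1 pq q1 [g0 g1]] := V [::] isT.
have c0 : forall o, 0 <= c o.
  move=> o; apply: mulr_ge0; last exact: expR_ge0.
  rewrite /round_prob; case: ifP => _; [|case: ifP => _]; lra.
apply: (@le_trans _ _ (\sum_(o : 'I_3) c o)).
  apply: ler_sum => o _.
  rewrite (sumseq_ext _ (F' := fun s => c o * (sprobI (fun t => P (o :: t)) (fun t => Q (o :: t)) s *
          MI (fun t => G (o :: t)) (k - dd G (o :: [::]) 0) s))).
    rewrite sumseq_scale -[leRHS]mulr1; apply: ler_wpM2l => //.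
    by apply: IH => s hs; apply: V.
  move=> s; rewrite sprobI_cons MI_cons /c /dd.
  rewrite !take0 mulrACA; reflexivity.
rewrite !big_ord_recl big_ord0 /c /round_prob /lf /=.
case: ifP => _; rewrite !expR0; last lra.
have gg : 0 <= G [::] <= 1 by rewrite g0 g1.
have := key_ineq p0 pq gg; lra.
Qed.

Lemma ind_ge0 b : 0 <= ind R b. Proof. by rewrite /ind; case: b. Qed.

Lemma size_seqof m (x : {ffun 'I_m -> 'I_3}) : size (seqof x) = m.
Proof. by rewrite size_map size_enum_ord. Qed.

Lemma nth_seqof m (x : {ffun 'I_m -> 'I_3}) (i : 'I_m) : nth ord0 (seqof x) i = x i.
Proof. by rewrite (nth_map i) ?size_enum_ord // nth_ord_enum. Qed.

Lemma hist_seqof m (x : outcome m) (i : 'I_m) : hist x i = take i (seqof x).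
Proof.
rewrite /hist /seqof -map_take; congr map.
apply: (inj_map val_inj).
have -> : filter (fun j : 'I_m => (j < i)%N) (enum 'I_m) =
    filter (preim val (fun n => (n < i)%N)) (enum 'I_m) by apply: eq_filter.
rewrite -filter_map map_take val_enum_ord take_iota.
rewrite (minn_idPl (ltnW (ltn_ord i))).
exact: (filter_iota_ltn 0 (ltnW (ltn_ord i))).
Qed.

Lemma seq_prob_seqof m P Q (x : outcome m) : seq_prob P Q x = sprobI P Q (seqof x).
Proof.
rewrite /seq_prob /sprobI size_seqof big_mkord; apply: eq_bigr => i _.
by rewrite hist_seqof nth_seqof.
Qed.

Lemma Zind_seqof m G k (x : outcome m) (i : 'I_m) :
  Zind G k x i = ind R (Aseq G (seqof x) i.+1 <= k).
Proof.
rewrite /Zind /Aseq; congr (ind R (_ <= k)).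
rewrite (@big_nat_widen _ _ _ 0 i.+1 m) ?ltn_ord // big_mkord.
apply: eq_big => [j|j _]; first by [].
by rewrite /dd /gam hist_seqof nth_seqof.
Qed.

Definition W0s G k s : R := \sum_(0 <= i < size s)
  ind R (val (nth ord0 s i) == 1%N) * G (take i s) * ind R (Aseq G s i.+1 <= k).

Lemma Wj_le m P Q G k j (x : outcome m) : valid_adversary m P Q G ->
  Wj G k j x <= W0s G k (seqof x).
Proof.
move=> V; rewrite /Wj /W0s size_seqof big_mkord [leLHS]big_mkcond.
apply: ler_sum => i _.
rewrite Zind_seqof /gam hist_seqof nth_seqof.
have hs : (size (take i (seqof x)) < m)%N by rewrite size_take size_seqof ltn_ord; exact: ltn_ord.
have [_ _ _ _ [g0 g1]] := V (take i (seqof x)) hs.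
have t0 : 0 <= ind R (val (x i) == 1%N) * G (take i (seqof x)) * ind R (Aseq G (seqof x) i.+1 <= k).
  by rewrite !mulr_ge0 // ind_ge0.
by case: ifP => _ //.
Qed.

Lemma LF_eq G k s : \sum_(0 <= i < size s) lf (k - Aseq G s i) (G (take i s)) (nth ord0 s i) =
  W0s G k s / 5 - 3 * \sum_(0 <= i < size s) ind R (Aseq G s i <= k) * dd G s i.
Proof.
rewrite /W0s mulr_suml mulr_sumr -sumrB; apply: eq_bigr => i _.
have -> : Aseq G s i.+1 = Aseq G s i + dd G s i by rewrite /Aseq big_nat_recr.
rewrite /lf /dd subr_ge0.
set A := Aseq G s i; set g := G (take i s).
case: (nth ord0 s i) => [[|[|[|n]]] Hn] //; rewrite /ind /= ?mul0r ?mul1r ?addr0 ?mulr0 ?mul0r;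
  case: (A <= k); lra.
Qed.

Lemma Tbound G s k n : 0 <= k -> (forall i, 0 <= dd G s i <= 1) ->
  \sum_(0 <= i < n) ind R (Aseq G s i <= k) * dd G s i <= k + 1.
Proof.
move=> k0 D.
suff : \sum_(0 <= i < n) ind R (Aseq G s i <= k) * dd G s i <= k + 1 /\
  (Aseq G s n <= k -> \sum_(0 <= i < n) ind R (Aseq G s i <= k) * dd G s i = Aseq G s n).
  by case.
elim: n => [|n [IH1 IH2]].
  by rewrite /Aseq !big_geq //; split => //; lra.
have EA : Aseq G s n.+1 = Aseq G s n + dd G s n by rewrite /Aseq big_nat_recr.
rewrite big_nat_recr // EA.
move: IH1 IH2; set T := \sum_(0 <= i < n) _ => IH1 IH2.
change (T + ind R (Aseq G s n <= k) * dd G s n <= k + 1 /\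
  (Aseq G s n + dd G s n <= k -> T + ind R (Aseq G s n <= k) * dd G s n = Aseq G s n + dd G s n)).
have [d0 d1] := andP (D n).
case: (boolP (Aseq G s n <= k)) => h.
  rewrite (IH2 h) /ind mul1r; split.
lra. by [].
rewrite [ind R false]/ind mul0r addr0; split; first lra.
move=> h2; exfalso; move/negP: h; apply; lra.
Qed.

Lemma dd_bounds m P Q G s i : valid_adversary m P Q G -> size s = m -> 0 <= dd G s i <= 1.
Proof.
move=> V hs; rewrite /dd.
case: (ltnP i (size s)) => h.
  have hs' : (size (take i s) < m)%N by rewrite size_take h -hs.
  have [_ _ _ _ [g0 g1]] := V (take i s) hs'.
  by rewrite /ind; case: ifP => _; apply/andP; split; lra.
by rewrite nth_default // /ind /= mul0r lexx ler01.
Qed.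

Lemma pointwise m P Q G k j lambda (x : outcome m) : valid_adversary m P Q G -> 0 <= k ->
  lambda < Wj G k j x -> 1 <= MI G k (seqof x) * expR (- (lambda / 5) + 3 * (k + 1)).
Proof.
move=> V k0 hl.
rewrite /MI -expRD -[leLHS]expR0 ler_expR LF_eq.
have := Wj_le k j x V.
have := Tbound (size (seqof x)) k0 (fun i => dd_bounds i V (size_seqof x)).
lra.
Qed.

Theorem claimA1' (m : nat) (P Q G : seq 'I_3 -> R) :
  valid_adversary m P Q G ->
  forall (k : R), 0 <= k ->
  forall (lambda : R) (j : 'I_m),
    prob_W_gt P Q G k j lambda <= expR (- (lambda / 5) + 3 * (k + 1)).
Proof.
move=> V k k0 lambda j.
set C := expR _.
have sp0 : forall x : outcome m, 0 <= seq_prob P Q x.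
  move=> x; rewrite /seq_prob; apply: prodr_ge0 => i _.
  have hs : (size (hist x i) < m)%N by rewrite hist_seqof size_take size_seqof ltn_ord; exact: ltn_ord.
  have [p0 p1 pq q1 _] := V (hist x i) hs.
  rewrite /round_prob; case: ifP => _; [|case: ifP => _]; lra.
rewrite /prob_W_gt big_mkcond.
apply: (@le_trans _ _ (\sum_(x : outcome m) seq_prob P Q x * (MI G k (seqof x) * C))).
  apply: ler_sum => x _; case: ifP => h.
    by apply: ler_peMr; [exact: sp0 | exact: (pointwise V k0 h)].
  by rewrite mulr_ge0 // mulr_ge0 // expR_ge0.
under eq_bigr => x _ do rewrite mulrA seq_prob_seqof.
rewrite -mulr_suml (sum_ffun_sumseq m (fun s => sprobI P Q s * MI G k s)).
rewrite -[leRHS]mul1r; apply: ler_wpM2r; first exact: expR_ge0.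
exact: Elemma.
Qed.
End S.

Theorem claimA1 (R : realType) (m : nat) (P Q G : seq 'I_3 -> R) :
  valid_adversary m P Q G ->
  forall (k : R), 0 <= k ->
  forall (lambda : R) (j : 'I_m),
    prob_W_gt P Q G k j lambda <= expR (- (lambda / 5) + 3 * (k + 1)).
Proof. exact: claimA1'. Qed.
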